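(* Let $R$ be a unital commutative Hausdorff topological ring whose group of units $R^\times$ is dense in $R$, and let $\lambda=\lambda^n$ with $n\in\mathbb N\cup\{\infty\}$. Then the group of units $\lambda^\times$ is dense in $\lambda$.
   Context: For $n\in\mathbb N$, $\lambda^n=R[\theta_1,\dots,\theta_n]$ is the Grassmann algebra over $R$ on odd generators $\theta_1,\dots,\theta_n$, i.e. $\lambda^n=\bigoplus_I R\theta_I$ over strictly increasing multi-indices $I$, with the product topology; $\lambda^\infty=R[\theta_i:i\in\mathbb N]=\bigcup_n\lambda^n$ with the direct limit topology with respect to the inclusions $\lambda^n\to\lambda^\infty$. *)

(* Defs.v *)
From HB Require Import structures.
From mathcomp Require Import all_boot all_algebra finmap.
From mathcomp Require Import all_classical all_reals topology.
Set Implicit Arguments. Unset Strict Implicit. Unset Printing Implicit Defensive.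
Import GRing.Theory.
Local Open Scope classical_set_scope.
Local Open Scope ring_scope.

HB.structure Definition TopComRing := {R of Topological R & GRing.ComPzRing R}.

Definition topological_ring (R : TopComRing.type) : Prop :=
  [/\ continuous (fun p : R * R => fst p + snd p),
      continuous (fun x : R => - x) &
      continuous (fun p : R * R => fst p * snd p)].

Definition units_of (R : TopComRing.type) : set R :=
  [set x | exists y : R, x * y = 1].

Inductive nbar := Fin of nat | Inf.

(* An element sum_I a_I theta_I of a Grassmann algebra over R is stored
   as its coefficient function I |-> a_I, where a strictly increasing
   multi-index I is identified with the finite set {fset nat} of its entries. *)
Definition gr (R : TopComRing.type) := {fset nat} -> R.

Definition idx_lt (N : nat) (I : {fset nat}) : Prop := forall i, i \in I -> (i < N)%N.

Definition supp_lt (R : TopComRing.type) (N : nat) (f : gr R) : Prop :=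
  forall I, f I != 0 -> idx_lt N I.

Definition lam (R : TopComRing.type) (n : nbar) : set (gr R) :=
  match n with
  | Fin N => [set f | supp_lt N f]
  | Inf => [set f | exists N, supp_lt N f]
  end.

(* sign of theta_I theta_J = sign * theta_{I u J} for disjoint I, J:
   (-1)^(number of pairs i in I, j in J with j < i) *)
Definition gsign (R : TopComRing.type) (I J : {fset nat}) : R :=
  (-1) ^+ (\sum_(i <- I) \sum_(j <- J) (j < i)%N)%N.

Definition gone (R : TopComRing.type) : gr R := fun I => if I == fset0 then 1 else 0.

Definition gmul (R : TopComRing.type) (f g : gr R) : gr R :=
  fun K => \sum_(I <- fpowerset K) gsign R I (K `\` I)%fset * f I * g (K `\` I)%fset.

Definition lam_unit (R : TopComRing.type) (n : nbar) : set (gr R) :=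
  [set x | lam n x /\ exists y, lam n y /\ gmul x y = gone R /\ gmul y x = gone R].

(* open subsets of lambda^N (N finite) for the product topology on
   lambda^N = prod_{I subset {0..N-1}} R theta_I (finitely many factors) *)
Definition prod_open (R : TopComRing.type) (N : nat) (U : set (gr R)) : Prop :=
  U `<=` lam (Fin N) /\
  forall a, U a -> exists W : {fset nat} -> set R,
    (forall I, idx_lt N I -> nbhs (a I) (W I)) /\
    (forall b, lam (Fin N) b -> (forall I, idx_lt N I -> W I (b I)) -> U b).

(* open subsets of lambda^n: product topology for finite n, direct limit
   topology w.r.t. the inclusions lambda^N -> lambda^oo for n = oo *)
Definition lam_open (R : TopComRing.type) (n : nbar) (U : set (gr R)) : Prop :=
  match n with
  | Fin N => prod_open N U
  | Inf => U `<=` lam Inf /\ forall N, prod_open N (U `&` lam (Fin N))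
  end.

Definition lam_dense (R : TopComRing.type) (n : nbar) (D : set (gr R)) : Prop :=
  forall U, lam_open n U -> U !=set0 -> U `&` D !=set0.

Arguments units_of R : clear implicits.
Arguments lam R n : clear implicits.
Arguments lam_unit R n : clear implicits.
Arguments lam_open R n U : clear implicits.
Arguments lam_dense R n D : clear implicits.

(* Main.v *)
Require Import Defs.
From HB Require Import structures.
From mathcomp Require Import all_boot all_algebra finmap.
From mathcomp Require Import all_classical all_reals topology.
From mathcomp Require Import ring zify.
Local Open Scope classical_set_scope.
Import GRing.Theory.
Local Open Scope ring_scope.

Section Alg.
Variable R : TopComRing.type.

Definition disj (A B : {fset nat}) := forall x, x \in B -> x \notin A.

Lemma sum_fsetU (F : nat -> nat) (A B : {fset nat}) : disj A B ->
  (\sum_(i <- (A `|` B)%fset) F i = \sum_(i <- A) F i + \sum_(i <- B) F i)%N.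
Proof.
move=> dAB; rewrite -big_cat; apply: perm_big; apply: uniq_perm.
- exact: fset_uniq.
- rewrite cat_uniq !fset_uniq /= andbT; apply/hasPn => x /dAB //.
- by move=> x; rewrite mem_cat in_fsetU.
Qed.

Definition cc (I J : {fset nat}) := (\sum_(i <- I) \sum_(j <- J) (j < i))%N.

Lemma cc_splitr I J L : disj J L -> cc I (J `|` L)%fset = (cc I J + cc I L)%N.
Proof.
move=> d; rewrite /cc -big_split /=; apply: eq_bigr => i _; exact: sum_fsetU.
Qed.

Lemma cc_splitl I J L : disj I J -> cc (I `|` J)%fset L = (cc I L + cc J L)%N.
Proof. move=> d; exact: sum_fsetU. Qed.

Lemma gsignE I J : gsign R I J = (-1) ^+ cc I J.
Proof. by []. Qed.

Lemma gsign0l K : gsign R fset0 K = 1.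
Proof. by rewrite gsignE /cc big_seq_fset0. Qed.

Lemma gsign0r K : gsign R K fset0 = 1.
Proof. rewrite gsignE /cc big1 // => i _; by rewrite big_seq_fset0. Qed.

Lemma gmul1l (f : gr R) : gmul (gone R) f = f.
Proof.
apply/funext => K; rewrite /gmul (bigD1_seq fset0) /=; last exact: fset_uniq.
  rewrite big1 ?addr0; last by move=> I /negbTE Hn; rewrite /gone Hn mulr0 mul0r.
  by rewrite gsign0l /gone eqxx fsetD0 !mul1r.
by rewrite fpowersetE fsub0set.
Qed.

Lemma gmul1r (f : gr R) : gmul f (gone R) = f.
Proof.
apply/funext => K; rewrite /gmul (bigD1_seq K) /=; last exact: fset_uniq.
  rewrite big1_seq ?addr0.
    by rewrite fsetDv gsign0r /gone eqxx !mulr1 mul1r.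
  move=> I /andP[HI]; rewrite fpowersetE => sIK; rewrite /gone.
  have -> : ((K `\` I)%fset == fset0) = false.
    by rewrite fsetD_eq0; apply/negbTE; apply: contra HI => sKI; rewrite eqEfsubset sIK sKI.
  by rewrite mulr0.
by rewrite fpowersetE fsubset_refl.
Qed.

Lemma sum_sub_pow (G : {fset nat} -> R) A K : (A `<=` K)%fset ->
  \sum_(I <- fpowerset A) G I = \sum_(I <- fpowerset K | (I `<=` A)%fset) G I.
Proof.
move=> sAK; rewrite -[RHS]big_filter; apply: perm_big; apply: uniq_perm.
- exact: fset_uniq.
- exact/filter_uniq/fset_uniq.
- move=> I; rewrite mem_filter !fpowersetE.
  case sIA: (I `<=` A)%fset => //=; by rewrite (fsubset_trans sIA sAK).
Qed.

Lemma reidx (H : {fset nat} -> R) I K : (I `<=` K)%fset ->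
  \sum_(A <- fpowerset K | (I `<=` A)%fset) H A =
  \sum_(B <- fpowerset (K `\` I)%fset) H (I `|` B)%fset.
Proof.
move=> sIK; rewrite -[LHS]big_filter -(big_map (fun B => (I `|` B)%fset) xpredT).
apply: perm_big; apply: uniq_perm.
- exact/filter_uniq/fset_uniq.
- rewrite map_inj_in_uniq ?fset_uniq // => B1 B2.
  rewrite !fpowersetE => s1 s2 e.
  apply/fsetP => x; move/fsetP: e => /(_ x); rewrite !inE.
  move/fsubsetP: s1 => /(_ x); move/fsubsetP: s2 => /(_ x); rewrite !inE.
  case: (x \in B1); case: (x \in B2); case: (x \in I) => //=.
  by move=> _ /(_ isT).
- move=> A; rewrite mem_filter fpowersetE; apply/andP/mapP.
  + move=> [sIA sAK]; exists (A `\` I)%fset.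
      by rewrite fpowersetE fsetSD.
    apply/fsetP => x; rewrite !inE; move/fsubsetP: sIA => /(_ x).
    by case: (x \in I); case: (x \in A) => //= ->.
  + move=> [B]; rewrite fpowersetE => sB ->; split; first exact: fsubsetUl.
    rewrite fsubUset sIK /=; apply: fsubset_trans sB _; exact: fsubsetDl.
Qed.


Lemma gmulA (f g h : gr R) : gmul (gmul f g) h = gmul f (gmul g h).
Proof.
apply/funext => K; rewrite /gmul.
transitivity (\sum_(A <- fpowerset K) \sum_(I <- fpowerset K | (I `<=` A)%fset)
  gsign R A (K `\` A)%fset * (gsign R I (A `\` I)%fset * f I * g (A `\` I)%fset) * h (K `\` A)%fset).
  rewrite [LHS]big_seq [RHS]big_seq; apply: eq_bigr => A; rewrite fpowersetE => sAK.
  by rewrite (sum_sub_pow _ _ _ sAK) mulr_sumr mulr_suml.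
rewrite (exchange_big_dep xpredT) //=.
rewrite [LHS]big_seq [RHS]big_seq; apply: eq_bigr => I; rewrite fpowersetE => sIK.
rewrite (reidx _ _ _ sIK) mulr_sumr [LHS]big_seq [RHS]big_seq.
apply: eq_bigr => B; rewrite fpowersetE => sB.
have dIB : disj I B.
  move=> x xB; move/fsubsetP: sB => /(_ x xB); rewrite inE; by case/andP.
have e1 : ((I `|` B) `\` I)%fset = B.
  apply/fsetP => x; rewrite !inE; case xB: (x \in B).
    by rewrite (dIB _ xB) orbT.
  by rewrite orbF; case: (x \in I).
have e2 : (K `\` (I `|` B))%fset = (K `\` I `\` B)%fset by rewrite fsetDDl.
have e3 : (K `\` I)%fset = (B `|` (K `\` I `\` B))%fset.
  apply/fsetP => x; rewrite !inE; move/fsubsetP: sB => /(_ x); rewrite !inE.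
  by case: (x \in B); case: (x \in I); case: (x \in K) => //= /(_ isT).
have dBL : disj B (K `\` I `\` B)%fset.
  by move=> x; rewrite !inE; case/andP => ->.
have s1 : gsign R I (K `\` I)%fset = gsign R I B * gsign R I (K `\` I `\` B)%fset.
  by rewrite {1}e3 !gsignE cc_splitr // exprD.
have s2 : gsign R (I `|` B)%fset (K `\` I `\` B)%fset =
   gsign R I (K `\` I `\` B)%fset * gsign R B (K `\` I `\` B)%fset.
  by rewrite !gsignE cc_splitl // exprD.
rewrite e1 e2 s1 s2; ring.
Qed.


Fixpoint frec (F : {fset nat} -> ({fset nat} -> R) -> R) (m : nat) (K : {fset nat}) : R :=
  if m is m'.+1 then F K (frec F m') else F K (fun _ => 0).

Definition respects (F : {fset nat} -> ({fset nat} -> R) -> R) :=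
  forall K g g', (forall J, (#|` J| < #|` K|)%N -> g J = g' J) -> F K g = F K g'.

Lemma frec_stab F : respects F -> forall m k K, (#|` K| <= m)%N -> (#|` K| <= k)%N ->
  frec F m K = frec F k K.
Proof.
move=> rF; elim=> [|m IH] [|k] K /= Hm Hk; apply: (rF) => J HJ.
- by move: Hm HJ; rewrite leqn0 => /eqP ->; rewrite ltn0.
- by move: Hm HJ; rewrite leqn0 => /eqP ->; rewrite ltn0.
- by move: Hk HJ; rewrite leqn0 => /eqP ->; rewrite ltn0.
- apply: IH; by rewrite -ltnS (leq_trans HJ).
Qed.

Definition ffix F K := frec F #|` K| K.

Lemma ffixE F : respects F -> forall K, ffix F K = F K (ffix F).
Proof.
move=> rF K; rewrite /ffix; case E: #|` K| => [|m] /=; apply: (rF) => J HJ.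
- by move: HJ; rewrite E ltn0.
- rewrite E ltnS in HJ; rewrite /ffix; exact: (@frec_stab F rF m _ J HJ (leqnn _)).
Qed.

Lemma card_lt_D (I K : {fset nat}) : (I `<=` K)%fset -> I != fset0 -> (#|` (K `\` I)%fset| < #|` K|)%N.
Proof.
move=> sIK nI; rewrite cardfsDS //.
have : (0 < #|` I|)%N by rewrite lt0n cardfs_eq0.
have := fsubset_leq_card sIK; lia.
Qed.

Lemma card_lt_prop (I K : {fset nat}) : (I `<=` K)%fset -> I != K -> (#|` I| < #|` K|)%N.
Proof. move=> sIK nI; apply: fproper_ltn_card; by rewrite fproperEneq nI sIK. Qed.

Variables (x : gr R) (v : R).
Hypothesis xv : x fset0 * v = 1.

Definition Fr K (g : {fset nat} -> R) := v * (gone R K -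
  \sum_(I <- fpowerset K | I != fset0) gsign R I (K `\` I)%fset * x I * g (K `\` I)%fset).
Definition Fl K (g : {fset nat} -> R) := (gone R K -
  \sum_(I <- fpowerset K | I != K) gsign R I (K `\` I)%fset * g I * x (K `\` I)%fset) * v.

Lemma Fr_resp : respects Fr.
Proof.
move=> K g g' H; rewrite /Fr; congr (_ * (_ - _)).
rewrite big_seq_cond [RHS]big_seq_cond; apply: eq_bigr => I /andP[]; rewrite fpowersetE => sIK nI.
by rewrite H // card_lt_D.
Qed.

Lemma Fl_resp : respects Fl.
Proof.
move=> K g g' H; rewrite /Fl; congr ((_ - _) * _).
rewrite big_seq_cond [RHS]big_seq_cond; apply: eq_bigr => I /andP[]; rewrite fpowersetE => sIK nI.
by rewrite H // card_lt_prop.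
Qed.

Definition yr := ffix Fr.
Definition yl := ffix Fl.

Lemma yr_inv : gmul x yr = gone R.
Proof.
apply/funext => K; rewrite /gmul (bigD1_seq fset0) /=; last exact: fset_uniq.
  rewrite gsign0l fsetD0 mul1r /yr ffixE; last exact: Fr_resp.
  rewrite /Fr mulrA xv mul1r; ring.
by rewrite fpowersetE fsub0set.
Qed.

Lemma yl_inv : gmul yl x = gone R.
Proof.
apply/funext => K; rewrite /gmul (bigD1_seq K) /=; last exact: fset_uniq.
  rewrite fsetDv gsign0r mul1r /yl ffixE; last exact: Fl_resp.
  rewrite /Fl -mulrA (mulrC v) xv mulr1; ring.
by rewrite fpowersetE fsubset_refl.
Qed.

Lemma yl_yr : yl = yr.
Proof. by rewrite -[yl]gmul1r -yr_inv -gmulA yl_inv gmul1l. Qed.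

Lemma yr_supp N : supp_lt N x -> supp_lt N yr.
Proof.
move=> sx.
suff H : forall m K, (#|` K| <= m)%N -> ~ idx_lt N K -> yr K = 0.
  move=> K nz; apply: contrapT => nK; by rewrite (H _ K (leqnn _) nK) eqxx in nz.
elim=> [|m IH] K Hm nK.
  exfalso; apply: nK; move: Hm; rewrite leqn0 cardfs_eq0 => /eqP -> i; by rewrite inE.
rewrite /yr ffixE; last exact: Fr_resp.
have K0 : (K : {fset nat}) != fset0.
  apply/negP => /eqP E; apply: nK => i; by rewrite E inE.
rewrite /Fr /gone (negbTE K0) big_seq_cond big1 ?subr0 ?mulr0 //.
move=> I /andP[]; rewrite fpowersetE => sIK nI.
have [->|/sx iI] := eqVneq (x I) 0; first by rewrite mulr0 mul0r.
have nD : ~ idx_lt N (K `\` I)%fset.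
  move=> iD; apply: nK => i iK; case iI': (i \in I); first exact: iI.
  by apply: iD; rewrite inE iI' iK.
rewrite -/(ffix Fr (K `\` I)%fset) -/yr IH ?mulr0 //.
by rewrite -ltnS (leq_trans (card_lt_D _ _ sIK nI) Hm).
Qed.

End Alg.

Lemma unit_ex (R : TopComRing.type) N (x : gr R) : supp_lt N x -> units_of R (x fset0) ->
  exists y, supp_lt N y /\ gmul x y = gone R /\ gmul y x = gone R.
Proof.
move=> sx [w xw]; exists (yr R x w); split; first exact: yr_supp.
split; first exact: yr_inv.
rewrite -yl_yr //; exact: yl_inv.
Qed.

Lemma find_b (R : TopComRing.type) N (U : set (gr R)) a :
  dense (units_of R) -> prod_open N U -> U a ->
  exists b, U b /\ supp_lt N b /\ units_of R (b fset0).
Proof.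
move=> dR [sub H] Ua; have [W [hW hU]] := H a Ua.
have i0 : idx_lt N fset0 by move=> i; rewrite inE.
have := hW _ i0; rewrite nbhsE => -[B [oB Ba] sBW].
have [u [Bu uU]] := dR B (ex_intro _ _ Ba) oB.
set b := fun I : {fset nat} => if I == fset0 then u else a I.
have sb : supp_lt N b.
  move=> I; rewrite /b; case: (boolP (I == fset0)) => [/eqP -> _| nI nz]; first exact: i0.
  exact: (sub a Ua).
exists b; split; last by split => //; rewrite /b eqxx.
apply: hU => // I iI; rewrite /b; case: (boolP (I == fset0)) => [/eqP -> | _]; first exact: sBW.
exact: nbhs_singleton (hW I iI).
Qed.

Theorem lemma2p2 (R : TopComRing.type) (n : nbar) :
  topological_ring R ->
  hausdorff_space R ->
  dense (units_of R) ->
  lam_dense R n (lam_unit R n).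
Proof.
move=> _ _ dR U oU [a Ua]; case: n oU => [N|] /= oU.
  have [b [Ub [sb ub]]] := @find_b R N U a dR oU Ua.
  have [y [sy [h1 h2]]] := @unit_ex R N b sb ub.
  by exists b; split => //; split => //; exists y.
case: oU => sub H; have [N sa] := sub a Ua.
have [b [[Ub _] [sb ub]]] := @find_b R N (U `&` lam R (Fin N)) a dR (H N) (conj Ua sa).
have [y [sy [h1 h2]]] := @unit_ex R N b sb ub.
exists b; split => //; split; first by exists N.
by exists y; split => //; exists N.
Qed.
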